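(* For every set $S\subseteq\mathbb{R}$ of nonnegative reals, the category $\overrightarrow{\mathbf{U}}_S$ has the Ramsey property. Consequently, the category $\overrightarrow{\mathbf{U}}$ of all finite convexly ordered ultrametric spaces with embeddings has the Ramsey property.
   Context: A convexly ordered ultrametric space is a structure $(U,d,<)$ where $d:U^2\to\mathbb{R}$ is an ultrametric (a metric with $d(x,z)\le\max\{d(x,y),d(y,z)\}$) and $<$ is a linear order on $U$ such that every closed ball $B(u,r)=\{y: d(u,y)\le r\}$ is convex with respect to $<$ (if $x,y\in B(u,r)$ and $x<z<y$ then $z\in B(u,r)$). Embeddings are injections $f$ with $d(f(x),f(y))=d(x,y)$ and $x<y\iff f(x)<f(y)$. The spectre of a space is $\mathrm{spec}(\mathcal{U})=\{d(x,y):x,y\in U\}$. $\overrightarrow{\mathbf{U}}$ is the category of finite convexly ordered ultrametric spaces with embeddings, and $\overrightarrow{\mathbf{U}}_S$ is its full subcategory of those $\mathcal{U}$ with $\mathrm{spec}(\mathcal{U})\subseteq S$. A category $\mathbf{C}$ has the Ramsey property if for every integer $k\ge2$ and all objects $\mathcal{A},\mathcal{B}$ with $\hom(\mathcal{A},\mathcal{B})\ne\varnothing$ there is an object $\mathcal{C}$ such that for every partition $\hom(\mathcal{A},\mathcal{C})=\Sigma_1\cup\dots\cup\Sigma_k$ into pairwise disjoint sets there are $i$ and $w\in\hom(\mathcal{B},\mathcal{C})$ with $w\cdot\hom(\mathcal{A},\mathcal{B})\subseteq\Sigma_i$. *)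

(* Defs.v *)
From mathcomp Require Import all_boot.
From Stdlib Require Import Reals.

Set Implicit Arguments.
Unset Strict Implicit.
Unset Printing Implicit Defensive.

Record COUS := MkCOUS {
  cu_car :> finType;
  cu_d : cu_car -> cu_car -> R;
  cu_lt : cu_car -> cu_car -> Prop;
  cu_d_nonneg : forall x y, (0 <= cu_d x y)%R;
  cu_d_eq0 : forall x y, cu_d x y = 0%R <-> x = y;
  cu_d_sym : forall x y, cu_d x y = cu_d y x;
  cu_d_tri : forall x y z, (cu_d x z <= cu_d x y + cu_d y z)%R;
  cu_d_ultra : forall x y z, (cu_d x z <= Rmax (cu_d x y) (cu_d y z))%R;
  cu_lt_irrefl : forall x, ~ cu_lt x x;
  cu_lt_trans : forall x y z, cu_lt x y -> cu_lt y z -> cu_lt x z;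
  cu_lt_total : forall x y, x <> y -> cu_lt x y \/ cu_lt y x;
  cu_convex : forall (u : cu_car) (r : R) (x y z : cu_car),
      (cu_d u x <= r)%R -> (cu_d u y <= r)%R ->
      cu_lt x z -> cu_lt z y -> (cu_d u z <= r)%R
}.

Definition is_emb (A B : COUS) (f : A -> B) : Prop :=
  injective f /\
  (forall x y : A, cu_d (f x) (f y) = cu_d x y) /\
  (forall x y : A, cu_lt x y <-> cu_lt (f x) (f y)).

Definition spec_in (S : R -> Prop) (A : COUS) : Prop :=
  forall x y : A, S (cu_d x y).

(* Ramsey property of the full subcategory of objects satisfying P.
   A partition of hom(A,C) into k pairwise disjoint classes is given by a
   colouring chi into 'I_k (defined on all finite functions A -> C; only its
   values on embeddings matter). *)
Definition ramsey_property (P : COUS -> Prop) : Prop :=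
  forall (k : nat), (2 <= k)%N ->
  forall A B : COUS, P A -> P B ->
  (exists f : {ffun A -> B}, is_emb f) ->
  exists C : COUS, P C /\
    forall chi : {ffun A -> C} -> 'I_k,
    exists (i : 'I_k) (w : {ffun B -> C}),
      is_emb w /\
      forall u : {ffun A -> B}, is_emb u -> chi [ffun x => w (u x)] = i.

(* Main.v *)
Require Import Defs.
From mathcomp Require Import all_boot.
From Stdlib Require Import Reals.
From Stdlib Require Import ClassicalEpsilon Lra.
From mathcomp Require Import zify.
Set Implicit Arguments.
Unset Strict Implicit.
Unset Printing Implicit Defensive.


Section HR.
Variables (P : finType) (prec : rel P).
Hypothesis irr : irreflexive prec.
Hypothesis trn : transitive prec.

Definition total_on (D : {set P}) :=
  forall x y, x \in D -> y \in D -> x != y -> prec x y || prec y x.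
Definition mono (D : {set P}) (Z : P -> nat) (M : nat) :=
  (forall x y, x \in D -> y \in D -> prec x y -> Z x < Z y) /\
  (forall x, x \in D -> Z x < M).
Definition incr (f : nat -> nat) M N :=
  (forall i j, i < j -> j < M -> f i < f j) /\ (forall i, i < M -> f i < N).
Definition resp (D : {set P}) (chi : (P -> nat) -> nat) :=
  forall Z Z', (forall x, x \in D -> Z x = Z' x) -> chi Z = chi Z'.

Definition rank (D : {set P}) x := #|[set y in D | prec y x]|.

Lemma rank_lt (D : {set P}) x y : x \in D -> prec x y -> rank D x < rank D y.
Proof.
move=> xD pxy; apply: proper_card; apply/properP; split.
  apply/subsetP=> z; rewrite !inE => /andP[zD pzx]; rewrite zD /=.
  exact: trn pzx pxy.
by exists x; rewrite !inE ?xD ?pxy ?irr.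
Qed.

Lemma min_exists (D : {set P}) : D != set0 -> total_on D ->
  exists2 x0, x0 \in D & forall y, y \in D -> y != x0 -> prec x0 y.
Proof.
case/set0Pn=> x1 x1D tot.
case: (arg_minnP (rank D) x1D) => x0 x0D hmin.
exists x0 => // y yD ny.
have nxy : x0 != y by rewrite eq_sym.
case/orP: (tot _ _ x0D yD nxy) => //.
move=> pyx; have := rank_lt yD pyx; have := hmin y yD; lia.
Qed.

Lemma total_sub (D D' : {set P}) : D' \subset D -> total_on D -> total_on D'.
Proof. move=> /subsetP s tot x y xD yD; exact: tot (s _ xD) (s _ yD). Qed.

Lemma pigeon M k (col : nat -> nat) (s : seq nat) :
  all (fun i => col i < k.+1) s -> k.+1 * M <= size s ->
  exists c, M <= count (fun i => col i == c) s.
Proof.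
elim: k s => [|k IH] s hall hs.
  exists 0; rewrite (@eq_in_count _ _ predT).
    by rewrite count_predT; rewrite mul1n in hs.
  by move=> i /(allP hall); rewrite ltnS leqn0.
case: (leqP M (count (fun i => col i == k.+1) s)) => hc; first by exists k.+1.
have h1 : all (fun i => col i < k.+1) [seq i <- s | col i != k.+1].
  apply/allP=> i; rewrite mem_filter => /andP[ne /(allP hall)]; rewrite ltnS leq_eqVlt.
  by rewrite (negbTE ne).
have h2 : k.+1 * M <= size [seq i <- s | col i != k.+1].
  have := count_predC (fun i => col i == k.+1) s.
  rewrite size_filter. move: hs hc. set a := count _ s. set b := count _ s. set z := size s. lia.
have [c hc'] := IH _ h1 h2.
exists c; apply: leq_trans hc' _; rewrite count_filter; apply: sub_count => i /=.
by case/andP.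
Qed.

Lemma pigeon_seq M k (col : nat -> nat) :
  (forall i, i < k * M -> col i < k) -> 0 < k ->
  exists c0 sigma, incr sigma M (k * M) /\ forall i, i < M -> col (sigma i) = c0.
Proof.
move=> hcol; case: k hcol => [//|k] hcol _.
have h1 : all (fun i => col i < k.+1) (iota 0 (k.+1 * M)).
  by apply/allP=> i; rewrite mem_iota => /andP[_ h]; apply: hcol.
have h2 : k.+1 * M <= size (iota 0 (k.+1 * M)) by rewrite size_iota.
have [c hc] := @pigeon M k col _ h1 h2.
exists c, (fun j => nth 0 [seq i <- iota 0 (k.+1 * M) | col i == c] j).
set s := [seq i <- _ | _].
have hsz : M <= size s by rewrite size_filter.
have hin : forall j, j < M -> nth 0 s j \in s.
  by move=> j hj; apply: mem_nth; apply: leq_trans hsz.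
split; [split|].
+ move=> i j hij hj.
  have := @sorted_ltn_nth _ ltn ltn_trans 0 s (sorted_filter ltn_trans _ (iota_ltn_sorted 0 _)).
  move=> /(_ i j); rewrite !inE; apply=> //; apply: leq_trans hsz; lia.
+ by move=> i /hin; rewrite mem_filter mem_iota => /andP[_ /andP[_]].
+ by move=> i /hin; rewrite mem_filter => /andP[/eqP].
Qed.


Definition HRstmt (D : {set P}) :=
  forall M k, exists N, forall chi, resp D chi -> (forall Z, chi Z < k) ->
    exists phi, incr phi M N /\
      exists c, forall Z, mono D Z M -> chi (fun x => phi (Z x)) = c.

Lemma mono_min (D : {set P}) x0 Z L :
  (forall y, y \in D -> y != x0 -> prec x0 y) -> x0 \in D ->
  mono D Z L -> forall y, y \in D -> Z x0 <= Z y.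
Proof.
move=> hmin x0D [hm _] y yD; case: (eqVneq y x0) => [->//|ne].
exact: ltnW (hm _ _ x0D yD (hmin _ yD ne)).
Qed.

Theorem HR q : forall D : {set P}, #|D| = q -> total_on D -> HRstmt D.
Proof.
elim: q => [|q IHq] D hD tot.
  move=> M k; exists M => chi hr hb; exists (fun i => i); split; first by split.
  exists (chi (fun _ => 0)) => Z _; apply: hr => x xD.
  by move: hD => /eqP; rewrite cards_eq0 => /eqP hD; rewrite hD inE in xD.
have Dn0 : D != set0 by rewrite -card_gt0 hD.
have [x0 x0D hmin] := min_exists Dn0 tot.
set D' := D :\ x0.
have hD' : #|D'| = q by move: hD; rewrite (cardsD1 x0) x0D /= add1n => -[].
have tot' : total_on D' by apply: total_sub tot; apply: subsetDl.
have IH := IHq D' hD' tot'.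
move=> M k.
have MH : forall L, exists N, forall chi, resp D chi -> (forall Z, chi Z < k) ->
    exists psi, incr psi L N /\ forall Z Z', mono D Z L -> mono D Z' L ->
      Z x0 = Z' x0 -> chi (fun x => psi (Z x)) = chi (fun x => psi (Z' x)).
  elim=> [|L IHL].
    exists 0 => chi _ _; exists (fun i => i); split; first by split.
    by move=> Z Z' [_ h]; have := h _ x0D.
  have [N' HN'] := IHL.
  have [N1 HN1] := IH N' k.
  exists N1.+1 => chi hr hb.
  pose chi1 := fun Y : P -> nat => chi (fun x => if x == x0 then 0 else (Y x).+1).
  have hr1 : resp D' chi1.
    move=> Y Y' hY; apply: hr => x xD; case: eqP => // /eqP ne.
    by rewrite hY // !inE ne.
  have [phi1 [[hphi1a hphi1b] [c1 hc1]]] := HN1 chi1 hr1 (fun Y => hb _).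
  pose chi2 := fun Z : P -> nat => chi (fun x => (phi1 (Z x)).+1).
  have hr2 : resp D chi2 by move=> Z Z' hZ; apply: hr => x xD; rewrite hZ.
  have [psi' [[hpsa hpsb] hmh]] := HN' chi2 hr2 (fun Z => hb _).
  pose psi := fun i => if i is j.+1 then (phi1 (psi' j)).+1 else 0.
  exists psi; split.
    split.
      case=> [|i] [|j] //= hij hj; rewrite ltnS; apply: hphi1a.
        by apply: hpsa; lia.
      by apply: hpsb; lia.
    case=> [|i] hi //=; rewrite ltnS; apply: hphi1b; apply: hpsb; lia.
  have case0 : forall Z, mono D Z L.+1 -> Z x0 = 0 -> chi (fun x => psi (Z x)) = c1.
    move=> Z hZ hZ0.
    have hpos : forall x, x \in D' -> 0 < Z x.
      move=> x; rewrite !inE => /andP[ne xD].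
      by case: hZ => hm _; have := hm _ _ x0D xD (hmin _ xD ne); rewrite hZ0.
    rewrite -(hc1 (fun x => psi' (Z x).-1)).
      apply: hr => x xD; case: eqP => [->|/eqP ne]; first by rewrite hZ0.
      have := hpos x; rewrite !inE ne xD => /(_ isT).
      by case: (Z x).
    case: hZ => hm hb'; split.
      move=> x y xD yD pxy; apply: hpsa.
        have := hm _ _ (subsetP (subsetDl _ _) _ xD) (subsetP (subsetDl _ _) _ yD) pxy.
        have := hpos _ xD; have := hpos _ yD; lia.
      have := hpos _ yD; have := hb' _ (subsetP (subsetDl _ _) _ yD); lia.
    move=> x xD; apply: hpsb; have := hpos _ xD; have := hb' _ (subsetP (subsetDl _ _) _ xD); lia.
  have caseS : forall Z, mono D Z L.+1 -> 0 < Z x0 ->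
      chi (fun x => psi (Z x)) = chi2 (fun x => psi' (Z x).-1).
    move=> Z hZ hZ0; apply: hr => x xD.
    have := mono_min hmin x0D hZ xD.
    case: (Z x) => [|m] h //=; lia.
  have monoP : forall Z, mono D Z L.+1 -> 0 < Z x0 -> mono D (fun x => (Z x).-1) L.
    move=> Z [hm hb'] hZ0; split.
      move=> x y xD yD pxy; have := hm _ _ xD yD pxy.
      have := mono_min hmin x0D (conj hm hb') xD; lia.
    move=> x xD; have := hb' _ xD; have := mono_min hmin x0D (conj hm hb') xD; lia.
  move=> Z Z' hZ hZ' e.
  case: (posnP (Z x0)) => h0.
    by rewrite case0 // case0 // -e.
  rewrite caseS // caseS -?e //.
  have h0' : 0 < Z' x0 by rewrite -e.
  apply: hmh; [exact: monoP|exact: monoP|by rewrite /= e].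
have [N HN] := MH (k * M).
exists N => chi hr hb.
have kpos : 0 < k by have := hb (fun _ => 0); lia.
have [psi [hpsi hmh]] := HN chi hr hb.
have col_ex : forall i, exists c, c < k /\ forall Z, mono D Z (k * M) -> Z x0 = i ->
    chi (fun x => psi (Z x)) = c.
  move=> i; case: (excluded_middle_informative
      (exists Z0, mono D Z0 (k * M) /\ Z0 x0 = i)) => [[Z0 [m0 e0]]|nex].
    exists (chi (fun x => psi (Z0 x))); split=> // Z hZ e.
    by apply: hmh; rewrite // e.
  by exists 0; split=> // Z hZ e; exfalso; apply: nex; exists Z.
pose col := fun i => proj1_sig (constructive_indefinite_description _ (col_ex i)).
have hcol : forall i, col i < k /\ forall Z, mono D Z (k * M) -> Z x0 = i ->
    chi (fun x => psi (Z x)) = col i.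
  by move=> i; rewrite /col; case: constructive_indefinite_description.
have [c0 [sigma [[hsa hsb] hsc]]] := @pigeon_seq M k col (fun i _ => proj1 (hcol i)) kpos.
exists (fun i => psi (sigma i)); split.
  case: hpsi => hpa hpb; split.
    by move=> i j hij hj; apply: hpa; [apply: hsa|apply: hsb].
  by move=> i hi; apply: hpb; apply: hsb.
exists c0 => Z [hm hb'].
rewrite -(hsc (Z x0) (hb' _ x0D)).
apply: (proj2 (hcol _)) => //; split.
  by move=> x y xD yD pxy; apply: hsa; [apply: hm|apply: hb'].
by move=> x xD; apply: hsb; apply: hb'.
Qed.

End HR.


Section Tree.
Variables (n N : nat) (delta : nat -> R).
Hypothesis d0 : delta 0 = 0%R.
Hypothesis dmono : forall i j, i <= j -> (delta i <= delta j)%R.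
Hypothesis dpos : forall j, 0 < j -> (0 < delta j)%R.

Definition pt := {ffun 'I_n -> 'I_N}.
Definition lvC (p q : pt) := \max_(l | p l != q l) (nat_of_ord l).+1.
Definition ltC (p q : pt) : Prop :=
  exists l : 'I_n, p l < q l /\ forall l' : 'I_n, l < l' -> p l' = q l'.
Definition dC (p q : pt) := delta (lvC p q).

Lemma lvC_leP p q m : lvC p q <= m <-> forall l : 'I_n, m <= l -> p l = q l.
Proof.
split.
  move/bigmax_leqP => h l hl; apply/eqP; apply/negPn/negP => ne; have := h l ne; lia.
move=> h; apply/bigmax_leqP => l ne; rewrite ltnNge; apply/negP => hl.
by rewrite h ?eqxx in ne.
Qed.

Lemma lvC_le_n p q : lvC p q <= n.
Proof. by apply/lvC_leP => l hl; have := ltn_ord l; lia. Qed.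

Lemma lvC_eq0 p q : lvC p q = 0 <-> p = q.
Proof.
split=> [h|->].
  by apply/ffunP => l; apply: (proj1 (lvC_leP p q 0)) => //; rewrite h.
by apply/eqP; rewrite -leqn0; apply/lvC_leP.
Qed.

Lemma lvC_sym p q : lvC p q = lvC q p.
Proof. by apply: eq_bigl => l; rewrite eq_sym. Qed.

Lemma lvC_ultra p q r : lvC p r <= maxn (lvC p q) (lvC q r).
Proof.
apply/lvC_leP => l hl.
have h1 := proj1 (lvC_leP p q _) (leqnn _) l.
have h2 := proj1 (lvC_leP q r _) (leqnn _) l.
rewrite h1 ?h2 //; lia.
Qed.

Lemma lvC_top p q : 0 < lvC p q ->
  exists l : 'I_n, (nat_of_ord l).+1 = lvC p q /\ p l != q l.
Proof.
move=> hpos; case: (pickP (fun l => p l != q l)) => [l0 hl0|none].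
  exists [arg max_(i > l0 | p i != q i) (nat_of_ord i).+1].
  rewrite /lvC (@bigmax_eq_arg _ l0 (fun i => p i != q i) (fun i : 'I_n => (nat_of_ord i).+1) hl0); split=> //.
  by case: arg_maxnP.
move: hpos; rewrite lt0n => /eqP; case; apply/lvC_eq0; apply/ffunP => l.
by have := none l => /negbFE/eqP.
Qed.

Lemma delta_max a b : (delta (maxn a b) <= Rmax (delta a) (delta b))%R.
Proof.
case: (leqP a b) => h; [exact: Rmax_r|exact: Rmax_l].
Qed.

Lemma delta_ge0 j : (0 <= delta j)%R.
Proof. by rewrite -d0; apply: dmono. Qed.

Lemma ltC_irrefl p : ~ ltC p p.
Proof. by case=> l [h _]; rewrite ltnn in h. Qed.

Lemma ltC_trans p q r : ltC p q -> ltC q r -> ltC p r.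
Proof.
case=> l1 [h1 e1] [l2 [h2 e2]].
case: (ltngtP l1 l2) => c.
- exists l2; split; first by rewrite e1.
  by move=> l' hl'; rewrite e1 ?e2 //; lia.
- exists l1; split; first by rewrite -e2.
  by move=> l' hl'; rewrite e1 ?e2 //; lia.
- have e : l1 = l2 by apply: val_inj.
  subst; exists l2; split; first by apply: ltn_trans h2.
  by move=> l' hl'; rewrite e1 ?e2.
Qed.

Lemma ltC_total p q : p <> q -> ltC p q \/ ltC q p.
Proof.
move=> ne; have hpos : 0 < lvC p q.
  by rewrite lt0n; apply/eqP => /lvC_eq0.
have [l [hl hne]] := lvC_top hpos.
have eqa : forall l' : 'I_n, l < l' -> p l' = q l'.
  by move=> l' hl'; apply: (proj1 (lvC_leP p q _) (leqnn _)); lia.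
case: (ltngtP (p l) (q l)) => c.
- by left; exists l.
- by right; exists l; split=> // l' h; rewrite eqa.
- by move: hne; rewrite (val_inj c) eqxx.
Qed.

Lemma lvC_convex u x y z : ltC x z -> ltC z y ->
  lvC u z <= maxn (lvC u x) (lvC u y).
Proof.
move=> [l1 [h1 e1]] [l2 [h2 e2]].
set m := maxn _ _.
have hx : forall l : 'I_n, m <= l -> u l = x l.
  by apply: (proj1 (lvC_leP u x _)); lia.
have hy : forall l : 'I_n, m <= l -> u l = y l.
  by apply: (proj1 (lvC_leP u y _)); lia.
apply/lvC_leP => l hl; apply/eqP/negPn/negP => ne.
pose Pr := fun l' : 'I_n => (m <= l') && (u l' != z l').
have Pl : Pr l by rewrite /Pr hl ne.
case: (arg_maxnP (fun i : 'I_n => nat_of_ord i) Pl) => lm /andP[hm nem] hmax.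
have above : forall l' : 'I_n, lm < l' -> u l' = z l'.
  move=> l' hl'; apply/eqP/negPn/negP => ne'.
  have := hmax l'; rewrite /Pr ne' andbT; move=> /(_ (leq_trans hm (ltnW hl'))); lia.
have c1 : l1 = lm.
  case: (ltngtP l1 lm) => c.
  - have : x lm = z lm by apply: e1.
    by rewrite -hx // => e; move: nem; rewrite e eqxx.
  - have e1' : x l1 = z l1.
      rewrite -hx; first by apply: above.
      exact: leq_trans hm (ltnW c).
    by move: h1; rewrite e1' ltnn.
  - exact: val_inj.
have c2 : l2 = lm.
  case: (ltngtP l2 lm) => c.
  - have : z lm = y lm by apply: e2.
    by rewrite -hy // => e; move: nem; rewrite e eqxx.
  - have e2' : z l2 = y l2.
      rewrite -hy; first by rewrite above.
      exact: leq_trans hm (ltnW c).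
    by move: h2; rewrite e2' ltnn.
  - exact: val_inj.
subst; move: h1 h2; rewrite -(hx _ hm) -(hy _ hm); lia.
Qed.

Lemma C_convex (u : pt) (r : R) (x y z : pt) :
  (dC u x <= r)%R -> (dC u y <= r)%R -> ltC x z -> ltC z y -> (dC u z <= r)%R.
Proof.
move=> hx hy hxz hzy; rewrite /dC.
apply: Rle_trans (dmono (lvC_convex u hxz hzy)) _.
apply: Rle_trans (delta_max _ _) _.
by apply: Rmax_lub.
Qed.

Lemma C_d_eq0 (p q : pt) : dC p q = 0%R <-> p = q.
Proof.
split=> [h|->]; last by rewrite /dC (proj2 (lvC_eq0 q q) erefl).
apply/lvC_eq0; apply/eqP; apply/negP => /negP; rewrite -lt0n => hp.
by have := dpos hp; rewrite -/(dC p q) h => /Rlt_irrefl.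
Qed.

Lemma C_ultra (p q r : pt) : (dC p r <= Rmax (dC p q) (dC q r))%R.
Proof. exact: Rle_trans (dmono (lvC_ultra p q r)) (delta_max _ _). Qed.

Lemma C_tri (p q r : pt) : (dC p r <= dC p q + dC q r)%R.
Proof.
apply: Rle_trans (C_ultra p q r) _.
have := delta_ge0 (lvC p q); have := delta_ge0 (lvC q r); rewrite /dC.
move=> a b; apply: Rmax_lub; lra.
Qed.

Lemma lvC_char (p q : pt) L : L <= n -> (forall l : 'I_n, p l = q l <-> L <= l) ->
  lvC p q = L.
Proof.
move=> hL h; apply/eqP; rewrite eqn_leq; apply/andP; split.
  by apply/lvC_leP => l hl; apply/h.
case: L hL h => [//|L] hL h.
have hl : L < n by lia.
pose l := Ordinal hl.
have ne : p l != q l by apply/eqP => /h; rewrite /=; lia.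
exact: (@leq_bigmax_cond _ (fun l => p l != q l) (fun l : 'I_n => (nat_of_ord l).+1) l ne).
Qed.

Lemma ltC_char (p q : pt) L (Q : Prop) : L <= n -> (Q -> 0 < L) ->
  (forall l : 'I_n, p l = q l <-> L <= l) ->
  (forall l : 'I_n, p l < q l <-> (l < L /\ Q)) -> (ltC p q <-> Q).
Proof.
move=> hL hQ heq hlt; split.
  by case=> l [/hlt [_ ?] _].
move=> hq; have L0 := hQ hq.
case: L hL L0 heq hlt hQ => [//|L] hL _ heq hlt _.
have hl : L < n by lia.
exists (Ordinal hl); split; first by apply/hlt; split.
by move=> l' hl'; apply/heq; rewrite /= in hl'; lia.
Qed.

Definition Ctree : COUS :=
  @MkCOUS {ffun 'I_n -> 'I_N} dC ltC (fun p q => delta_ge0 _) C_d_eq0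
    (fun p q => f_equal delta (lvC_sym p q)) C_tri C_ultra ltC_irrefl
    ltC_trans ltC_total C_convex.

End Tree.


Definition decP (Q : Prop) : bool := if excluded_middle_informative Q then true else false.
Lemma decPP Q : decP Q <-> Q.
Proof. by rewrite /decP; case: excluded_middle_informative. Qed.

Section Nodes.
Variables (lev : R -> nat) (n : nat).
Hypothesis lev_mono : forall a b, (a <= b)%R -> lev a <= lev b.
Hypothesis lev0 : lev 0%R = 0.
Variable X : COUS.
Definition lv (x y : X) := lev (cu_d x y).

Lemma lv_refl x : lv x x = 0.
Proof. by rewrite /lv (proj2 (cu_d_eq0 x x) erefl). Qed.

Lemma lv_sym x y : lv x y = lv y x.
Proof. by rewrite /lv cu_d_sym. Qed.

Lemma lev_max a b : lev (Rmax a b) <= maxn (lev a) (lev b).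
Proof.
case: (Rle_dec a b) => h.
  by rewrite Rmax_right //; lia.
by rewrite Rmax_left; [lia|lra].
Qed.

Lemma lv_ultra x y z : lv x z <= maxn (lv x y) (lv y z).
Proof. exact: leq_trans (lev_mono (cu_d_ultra x y z)) (lev_max _ _). Qed.

Lemma lv_convex u x y z r : lv u x <= r -> lv u y <= r -> cu_lt x z -> cu_lt z y ->
  lv u z <= r.
Proof.
move=> hx hy hxz hzy.
have := cu_convex (Rmax_l (cu_d u x) (cu_d u y)) (Rmax_r (cu_d u x) (cu_d u y)) hxz hzy.
move=> /lev_mono h; apply: leq_trans h _; apply: leq_trans (lev_max _ _) _.
rewrite -/(lv u x) -/(lv u y); lia.
Qed.

Lemma lv_neq x y : 0 < lv x y -> x <> y.
Proof. by move=> h e; rewrite e lv_refl in h. Qed.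

Lemma ball_order a a1 a' a1' r : lv a a1 <= r -> lv a' a1' <= r -> r < lv a a' ->
  cu_lt a a' -> cu_lt a1 a1'.
Proof.
move=> h1 h2 h3 lt1.
have u1 := lv_ultra a a1 a'; have u2 := lv_ultra a1 a1' a'; rewrite (lv_sym a1' a') in u2.
have ne : a1 <> a1'.
  by move=> e; subst; move: u1; rewrite (lv_sym a1' a') => u1; lia.
case: (cu_lt_total ne) => // lt2.
have ne' : a1 <> a'.
  by move=> e; subst; lia.
case: (cu_lt_total ne') => lt3.
- have := @lv_convex a' a1' a' a1 r h2 (ltac:(by rewrite lv_refl)) lt2 lt3.
  rewrite (lv_sym a' a1) => h; lia.
- have := @lv_convex a a a1 a' r (ltac:(by rewrite lv_refl)) h1 lt1 lt3.
  lia.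
Qed.

Lemma lv_mid x y z : cu_lt x y -> cu_lt y z -> lv x y <= lv x z /\ lv y z <= lv x z.
Proof.
move=> hxy hyz; split.
  by apply: (@lv_convex x x z y); rewrite ?lv_refl.
rewrite lv_sym (lv_sym x z).
by apply: (@lv_convex z x z y); rewrite ?lv_refl // lv_sym.
Qed.

Definition PN := ({set X} * 'I_n)%type.
Definition node (x : X) (l : 'I_n) : PN := ([set y | lv x y <= l], l).

Lemma node_eq x y l : node x l = node y l <-> lv x y <= l.
Proof.
split.
  case=> /setP /(_ y); rewrite !inE lv_refl => ->; done.
move=> h; congr pair; apply/setP => z; rewrite !inE.
have := lv_ultra x y z; have := lv_ultra y x z; rewrite (lv_sym y x).
case: (leqP (lv y z) l); case: (leqP (lv x z) l) => //; lia.
Qed.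

Definition Phi x y (l l' : nat) : Prop :=
  (l' < l /\ lv x y <= l) \/ (maxn l l' < lv x y /\ cu_lt x y).

Lemma Phi_inv x y x1 y1 l l' : lv x x1 <= l -> lv y y1 <= l' -> Phi x y l l' ->
  Phi x1 y1 l l'.
Proof.
rewrite /Phi; move=> h1 h2 [[c1 c2]|[c1 c2]].
  left; split=> //.
  have := lv_ultra x1 x y1; have := lv_ultra x y y1.
  rewrite (lv_sym x1 x); lia.
right; split.
  have := lv_ultra x x1 y; have := lv_ultra x1 y1 y; rewrite (lv_sym y1 y); lia.
apply: (@ball_order x x1 y y1 (maxn l l')) => //; lia.
Qed.

Lemma Phi_trans x y z l l' l'' : Phi x y l l' -> Phi y z l' l'' -> Phi x z l l''.
Proof.
rewrite /Phi; move=> [[a1 a2]|[a1 a2]] [[b1 b2]|[b1 b2]].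
- left; split; first lia.
  have := lv_ultra x y z; lia.
- case: (leqP (lv y z) l) => c.
    left; split; first lia.
    have := lv_ultra x y z; lia.
  right; split.
    have := lv_ultra x y z; have := lv_ultra y x z; rewrite (lv_sym y x); lia.
  apply: (@ball_order y x z z l) => //; [by rewrite lv_sym | by rewrite lv_refl].
- right; split.
    have := lv_ultra x z y; rewrite (lv_sym z y); lia.
  apply: (@ball_order x x y z l') => //; rewrite ?lv_refl //; lia.
- have [m1 m2] := lv_mid a2 b2.
  right; split; first lia.
  exact: cu_lt_trans a2 b2.
Qed.

Definition precN (nu mu : PN) : bool :=
  decP (exists x y (l l' : 'I_n), nu = node x l /\ mu = node y l' /\ Phi x y l l').

Lemma precN_node x y l l' : precN (node x l) (node y l') <-> Phi x y l l'.
Proof.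
rewrite /precN decPP; split; last by move=> h; exists x, y, l, l'.
case=> x1 [y1 [l1 [l1' [e1 [e2 h]]]]].
have el : l = l1 by case: e1.
have el' : l' = l1' by case: e2.
subst l1 l1'.
apply: (@Phi_inv x1 y1) => //.
  by rewrite lv_sym; apply/(node_eq x x1 l).
by rewrite lv_sym; apply/(node_eq y y1 l').
Qed.

Lemma precN_irr : irreflexive precN.
Proof.
move=> nu; apply/negP => /decPP [x [y [l [l' [e1 [e2 h]]]]]].
have el : l = l' by rewrite e1 in e2; case: e2.
subst l'; rewrite e1 in e2; have := proj1 (node_eq x y l) e2.
case: h => [[c _]|[c _]]; first by rewrite ltnn in c.
move: c; rewrite maxnn; lia.
Qed.

Lemma precN_trans : transitive precN.
Proof.
move=> mu nu rho /decPP [x [y [l [l' [e1 [e2 h1]]]]]] /decPP [y' [z [l2 [l'' [e3 [e4 h2]]]]]].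
have el : l2 = l' by rewrite e2 in e3; case: e3.
subst l2; rewrite e2 in e3.
have hy : lv y' y <= l' by apply/(node_eq y' y l'); rewrite -e3.
have hz : lv z z <= l'' by rewrite lv_refl.
have h2' : Phi y z l' l'' := Phi_inv hy hz h2.
apply/decPP; exists x, z, l, l''; split=> //; split=> //.
exact: Phi_trans h1 h2'.
Qed.


Definition DN : {set PN} := [set node p.1 p.2 | p : X * 'I_n].

Lemma DN_node x l : node x l \in DN.
Proof. by apply/imsetP; exists (x, l). Qed.

Lemma DN_inv nu : nu \in DN -> exists x l, nu = node x l.
Proof. by case/imsetP => -[x l] _ ->; exists x, l. Qed.

Lemma precN_total : total_on precN DN.
Proof.
move=> nu mu /DN_inv [x [l ->]] /DN_inv [y [l' ->]] ne.
case: (leqP (lv x y) (maxn l l')) => c.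
  case: (ltngtP l l') => c'.
  - apply/orP; right; apply/precN_node; left; split=> //; rewrite lv_sym; lia.
  - apply/orP; left; apply/precN_node; left; split=> //; lia.
  - have e : l = l' by apply: val_inj.
    subst l'; move: ne; rewrite (proj2 (node_eq x y l)) ?eqxx //; move: c; rewrite maxnn.
    done.
have ne' : x <> y by apply: lv_neq; lia.
case: (cu_lt_total ne') => h.
  by apply/orP; left; apply/precN_node; right.
apply/orP; right; apply/precN_node; right; split=> //; rewrite lv_sym maxnC.
exact: c.
Qed.

Lemma node_nat (x : X) (l : 'I_n) : (node x l).2 = l.
Proof. by []. Qed.

End Nodes.



Section Fold.
Variables (T : eqType) (f : T -> R) (m : R).
Definition fmax (s : seq T) := foldr (fun x acc => Rmax (f x) acc) m s.
Lemma fmax_ge s : (m <= fmax s)%R /\ forall x, x \in s -> (f x <= fmax s)%R.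
Proof.
elim: s => [|y s [IH1 IH2]] /=; first by split=> //; apply: Rle_refl.
split; first by apply: Rle_trans IH1 (Rmax_r _ _).
move=> x; rewrite inE => /orP[/eqP->|xs]; first exact: Rmax_l.
exact: Rle_trans (IH2 _ xs) (Rmax_r _ _).
Qed.
Lemma fmax_le s b : (m <= b)%R -> (forall x, x \in s -> (f x <= b)%R) -> (fmax s <= b)%R.
Proof.
move=> hm; elim: s => [|y s IH] hs //=.
apply: Rmax_lub; first by apply: hs; rewrite mem_head.
by apply: IH => x xs; apply: hs; rewrite inE xs orbT.
Qed.
Lemma fmax_in s : fmax s = m \/ exists2 x, x \in s & fmax s = f x.
Proof.
elim: s => [|y s IH] /=; first by left.
case: (Rle_dec (f y) (fmax s)) => h.
  rewrite Rmax_right //; case: IH => [->|[x xs ->]]; first by left.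
  by right; exists x => //; rewrite inE xs orbT.
by rewrite Rmax_left; [right; exists y => //; rewrite mem_head|lra].
Qed.
End Fold.

Section Lev.
Variable B : COUS.
Definition dd (p : B * B) := cu_d p.1 p.2.
Definition posp (p : B * B) := decP (0 < dd p)%R.
Definition levB (t : R) := #|[set p : B * B | posp p && decP (dd p <= t)%R]|.
Definition nB := #|[set p : B * B | posp p]|.

Lemma levB_mono a b : (a <= b)%R -> levB a <= levB b.
Proof.
move=> h; apply: subset_leq_card; apply/subsetP => p; rewrite !inE.
case/andP=> -> /decPP h'; apply/decPP; lra.
Qed.

Lemma levB0 : levB 0 = 0.
Proof.
apply/eqP; rewrite cards_eq0; apply/eqP/setP => p; rewrite !inE.
apply/negP => /andP[/decPP h1 /decPP h2]; lra.
Qed.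

Lemma levB_le_n t : levB t <= nB.
Proof.
by apply: subset_leq_card; apply/subsetP => p; rewrite !inE => /andP[].
Qed.

Lemma levB_strict (p : B * B) t : (0 < dd p)%R -> (t < dd p)%R -> levB t < levB (dd p).
Proof.
move=> h1 h2; apply: proper_card; apply/properP; split.
  apply/subsetP => q; rewrite !inE => /andP[-> /decPP h]; apply/decPP; lra.
exists p; rewrite !inE.
  by apply/andP; split; apply/decPP; [|apply: Rle_refl].
apply/negP => /andP[_ /decPP h]; lra.
Qed.

Lemma dd_ge0 p : (0 <= dd p)%R.
Proof. exact: cu_d_nonneg. Qed.

Lemma levB_pos p : (0 < dd p)%R -> 0 < levB (dd p).
Proof. by move=> h; have := levB_strict h h; rewrite levB0. Qed.

Lemma nB_pos p : (0 < dd p)%R -> 0 < nB.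
Proof. by move=> h; apply: leq_trans (levB_pos h) (levB_le_n _). Qed.

Variables (S : R -> Prop) (m0 : R).
Hypothesis hS : spec_in S B.
Hypothesis S0 : S 0%R.
Hypothesis m0pos : (0 < m0)%R.
Hypothesis m0min : 0 < nB -> S m0 /\ forall p, (0 < dd p)%R -> (m0 <= dd p)%R.

Definition delta (j : nat) : R :=
  if j is 0 then 0%R else fmax dd m0 [seq p <- enum {: B * B} | levB (dd p) <= j].

Lemma delta0 : delta 0 = 0%R. Proof. by []. Qed.

Lemma delta_pos j : 0 < j -> (0 < delta j)%R.
Proof. case: j => // j _ /=; exact: Rlt_le_trans m0pos (proj1 (fmax_ge _ _ _)). Qed.

Lemma delta_mono i j : i <= j -> (delta i <= delta j)%R.
Proof.
case: i => [|i] h.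
  case: j h => [|j] _; first exact: Rle_refl.
  exact: Rlt_le (delta_pos (ltn0Sn j)).
case: j h => [//|j] h /=.
apply: fmax_le; first exact: (proj1 (fmax_ge _ _ _)).
move=> p; rewrite mem_filter => /andP[hp pe]; apply: (proj2 (fmax_ge _ _ _)).
by rewrite mem_filter pe andbT; apply: leq_trans hp h.
Qed.

Lemma delta_d p : delta (levB (dd p)) = dd p.
Proof.
case: (Rle_lt_or_eq_dec _ _ (dd_ge0 p)) => h; last first.
  by rewrite -h levB0.
have hl := levB_pos h.
case ej: (levB (dd p)) hl => [//|j] _ /=.
have [_ hm] := m0min (nB_pos h).
apply: Rle_antisym.
  apply: fmax_le; first exact: hm.
  move=> q; rewrite mem_filter => /andP[hq _].
  case: (Rle_dec (dd q) (dd p)) => // hqp; exfalso.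
  have hq0 : (0 < dd q)%R by have := dd_ge0 p; lra.
  have := levB_strict hq0 (Rnot_le_lt _ _ hqp); move: hq; rewrite ej; lia.
apply: (proj2 (fmax_ge _ _ _)); rewrite mem_filter ej leqnn /=.
by rewrite mem_enum.
Qed.

Lemma delta_S j : j <= nB -> S (delta j).
Proof.
case: j => [//|j] hj /=.
have [hm0 _] := m0min (leq_trans (ltn0Sn j) hj).
case: (fmax_in dd m0 [seq p <- enum {: B * B} | levB (dd p) <= j.+1]) => [->//|[p _ ->]].
exact: hS.
Qed.

End Lev.


Lemma main_ramsey (S : R -> Prop) : ramsey_property (spec_in S).
Proof.
move=> k hk A B hA hB [f0 hf0].
case: (pickP (fun _ : B => true)) => [b0 _|noB]; last first.
  exists B; split=> // chi.
  pose w : {ffun B -> B} := [ffun b => b].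
  have hw : is_emb w.
    split; first by move=> x y; rewrite !ffunE.
    by split=> x y; rewrite !ffunE.
  exists (chi [ffun x => w (f0 x)]), w; split=> // u hu.
  by congr chi; apply/ffunP => x; have := noB (f0 x).
have S0 : S 0%R by have := hB b0 b0; rewrite (proj2 (cu_d_eq0 b0 b0) erefl).
have [m0 [m0pos m0min]] : exists m0, (0 < m0)%R /\ (0 < nB B -> S m0 /\
    forall p : B * B, (0 < dd p)%R -> (m0 <= dd p)%R).
  case: (posnP (nB B)) => hn.
    by exists 1%R; split; [lra|].  
  have [p0 hp0] : exists p0 : B * B, posp p0.
    by move: hn; rewrite lt0n cards_eq0 => /set0Pn [p0]; rewrite inE => h; exists p0.
  case: (arg_minnP (fun p => levB B (dd p)) hp0) => pm hpm hmin.
  exists (dd pm); move/decPP: hpm => hpm; split => //; split => //; first exact: hB.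
  move=> p hp; case: (Rle_dec (dd pm) (dd p)) => // h; exfalso.
  have := levB_strict hpm (Rnot_le_lt _ _ h).
  have : posp p by apply/decPP.
  move=> /hmin; lia.
pose lev := levB B.
pose n := nB B.
have lm : forall a b, (a <= b)%R -> lev a <= lev b := @levB_mono B.
have l0 : lev 0%R = 0 := @levB0 B.
pose delta' := delta B m0.
have d0 : delta' 0 = 0%R by [].
have dmono : forall i j, i <= j -> (delta' i <= delta' j)%R := @delta_mono B m0 m0pos.
have dpos : forall j, 0 < j -> (0 < delta' j)%R := @delta_pos B m0 m0pos.
have irrA := @precN_irr lev n lm l0 A.
have trnA := @precN_trans lev n lm l0 A.
have totA := @precN_total lev n lm l0 A.
have irrB := @precN_irr lev n lm l0 B.
have trnB := @precN_trans lev n lm l0 B.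
have totB := @precN_total lev n lm l0 B.
pose DA := DN lev n A.
pose DB := DN lev n B.
pose M := #|DB|.
have [N HN] := @HR _ _ irrA trnA _ DA erefl totA M k.
pose C := Ctree n N.+1 d0 dmono dpos.
exists C; split.
  by move=> p q; exact: (delta_S hB S0 m0min (lvC_le_n p q)).
move=> chi.
pose chi' := fun Z : PN n A -> nat =>
  nat_of_ord (chi [ffun a => ([ffun l => inord (Z (node lev a l))] : C)]).
have hr : resp DA chi'.
  move=> Z Z' hZ; rewrite /chi'; congr (nat_of_ord (chi _)).
  apply/ffunP => a; rewrite !ffunE; apply/ffunP => l; rewrite !ffunE hZ //.
  exact: DN_node.
have hb : forall Z, chi' Z < k by move=> Z; exact: ltn_ord.
have [phi [[hpa hpb] [c hc]]] := HN chi' hr hb.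
pose ZB := rank (precN lev (n:=n) (X:=B)) DB.
have ZB_lt : forall nu mu, nu \in DB -> precN lev nu mu -> ZB nu < ZB mu.
  by move=> nu mu; apply: rank_lt.
have ZB_bd : forall nu, nu \in DB -> ZB nu < M.
  move=> nu hnu; apply: proper_card; apply/properP; split.
    by apply/subsetP => x; rewrite inE => /andP[].
  by exists nu => //; rewrite inE irrB andbF.
have ZB_iff : forall nu mu, nu \in DB -> mu \in DB -> (ZB nu < ZB mu <-> precN lev nu mu).
  move=> nu mu hn hm; split; last exact: ZB_lt.
  move=> h; case: (eqVneq nu mu) => [e|ne]; first by rewrite e ltnn in h.
  case/orP: (totB _ _ hn hm ne) => // hp; have := ZB_lt _ _ hm hp; lia.
have ZB_eq : forall nu mu, nu \in DB -> mu \in DB -> (ZB nu = ZB mu <-> nu = mu).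
  move=> nu mu hn hm; split=> [h|->//]; case: (eqVneq nu mu) => // ne.
  case/orP: (totB _ _ hn hm ne) => hp.
    by have := ZB_lt _ _ hn hp; lia.
  by have := ZB_lt _ _ hm hp; lia.
have phi_lt : forall i j, i < M -> j < M -> (phi i < phi j <-> i < j).
  move=> i j hi hj; split; last by move=> h; apply: hpa.
  move=> h; case: (ltngtP i j) => // c'.
    by have := hpa _ _ c' hi; lia.
  by subst; lia.
pose w : {ffun B -> C} :=
  [ffun b => ([ffun l => inord (phi (ZB (node lev b l)))] : C)].
have wval : forall b (l : 'I_n),
    nat_of_ord ((w b : {ffun 'I_n -> 'I_N.+1}) l) = phi (ZB (node lev b l)).
  move=> b l; rewrite /w !ffunE inordK // ltnS; apply: ltnW; apply: hpb.
  by apply: ZB_bd; exact: DN_node.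
have wlt : forall b b' (l : 'I_n),
    ((w b : {ffun 'I_n -> 'I_N.+1}) l < (w b' : {ffun 'I_n -> 'I_N.+1}) l)
    <-> (l < lv lev b b' /\ cu_lt b b').
  move=> b b' l; rewrite !wval phi_lt ?ZB_bd ?DN_node // ZB_iff ?DN_node //.
  rewrite (precN_node lm l0) /Phi maxnn; split.
    by case=> [[h _]|//]; rewrite ltnn in h.
  by move=> h; right.
have weq : forall b b' (l : 'I_n),
    (w b : {ffun 'I_n -> 'I_N.+1}) l = (w b' : {ffun 'I_n -> 'I_N.+1}) l
    <-> lv lev b b' <= l.
  move=> b b' l; rewrite -(node_eq lm l0) -ZB_eq ?DN_node //; split.
    move=> e; have : nat_of_ord ((w b : {ffun 'I_n -> 'I_N.+1}) l) =
      (w b' : {ffun 'I_n -> 'I_N.+1}) l by rewrite e.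
    rewrite !wval => e'.
    case: (ltngtP (ZB (node lev b l)) (ZB (node lev b' l))) => // h.
      by have := proj2 (phi_lt _ _ (ZB_bd _ (DN_node _ _ _)) (ZB_bd _ (DN_node _ _ _))) h; lia.
    by have := proj2 (phi_lt _ _ (ZB_bd _ (DN_node _ _ _)) (ZB_bd _ (DN_node _ _ _))) h; lia.
  by move=> e; apply: val_inj; rewrite /= !wval e.
have wlv : forall b b', lvC (w b : {ffun 'I_n -> 'I_N.+1}) (w b') = lv lev b b'.
  move=> b b'; apply: lvC_char; first exact: levB_le_n.
  by move=> l; apply: weq.
have dw : forall x y, cu_d (w x) (w y) = cu_d x y.
  move=> x y; change (delta' (lvC (w x : {ffun 'I_n -> 'I_N.+1}) (w y)) = cu_d x y).
  by rewrite wlv; exact: (@delta_d B S m0 m0min (x, y)).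
have hw : is_emb w.
  split; [|split].
  - move=> x y e; apply/(cu_d_eq0 x y); rewrite -dw e.
    exact: (proj2 (cu_d_eq0 _ _) erefl).
  - exact: dw.
  - move=> x y; symmetry.
    change (ltC (w x : {ffun 'I_n -> 'I_N.+1}) (w y) <-> cu_lt x y).
    apply: (ltC_char (L := lv lev x y)); [exact: levB_le_n| |exact: weq|exact: wlt].
    move=> hxy; have ne : x <> y by move=> e; subst; exact: cu_lt_irrefl hxy.
    apply: (@levB_pos B (x, y)).
    case: (Rle_lt_or_eq_dec _ _ (cu_d_nonneg x y)) => // e.
    by exfalso; apply: ne; apply/cu_d_eq0; rewrite -e.
exists (chi [ffun x => w (f0 x)]), w; split=> // u hu.
suff key : forall v, is_emb v -> nat_of_ord (chi [ffun x => w (v x)]) = c.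
  by apply: val_inj; rewrite /= !key.
move=> v [vinj [vd vlt]].
have vlv : forall a a', lv lev (v a) (v a') = lv lev a a' by move=> a a'; rewrite /lv vd.
pose Zv := fun nu : PN n A =>
  if [pick a in nu.1] is Some a then ZB (node lev (v a) nu.2) else 0.
have Zv_node : forall a l, Zv (node lev a l) = ZB (node lev (v a) l).
  move=> a l; rewrite /Zv; case: pickP => [a1 ha1|none].
    congr ZB; apply/(node_eq lm l0); rewrite vlv lv_sym.
    by move: ha1; rewrite /= inE.
  by have := none a; rewrite /= inE lv_refl.
have hm : mono (precN lev (n:=n) (X:=A)) DA Zv M.
  split.
    move=> x y /DN_inv[a [l ->]] /DN_inv[a' [l' ->]] /(precN_node lm l0) hP.
    rewrite !Zv_node; apply: ZB_lt; first exact: DN_node.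
    apply/(precN_node lm l0); move: hP; rewrite /Phi !vlv.
    by case=> [h|[h1 h2]]; [left|right; split=> //; apply/vlt].
  by move=> x /DN_inv[a [l ->]]; rewrite Zv_node; apply: ZB_bd; exact: DN_node.
rewrite -(hc Zv hm) /chi'; congr (nat_of_ord (chi _)).
apply/ffunP => a; rewrite !ffunE; apply/ffunP => l; rewrite !ffunE Zv_node.
by [].
Qed.

Theorem theorem4p2 :
  (forall S : R -> Prop, (forall r, S r -> (0 <= r)%R) ->
     ramsey_property (spec_in S)) /\
  ramsey_property (fun _ : COUS => True).
Proof.
split; first by move=> S _; exact: main_ramsey.
move=> k hk A B _ _ hf.
have [C [_ HC]] := @main_ramsey (fun r => (0 <= r)%R) k hk A B
  (fun x y => cu_d_nonneg x y) (fun x y => cu_d_nonneg x y) hf.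
by exists C.
Qed.
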